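(* Let $n,p$ be positive integers, $X\in\mathbb{R}^{n\times p}$, $\mathbf y\in\mathbb{R}^n$ and $\delta>0$. For any $j\in\{1,\dots,p\}$, if the coordinates $t_i$, $i\neq j$, of $\mathbf t\in[0,1)^p$ are held fixed, then \[ \lim_{t_j\downarrow 0}\boldsymbol\zeta_{\mathbf t}(j)=0, \] where $\boldsymbol\zeta_{\mathbf t}(j)$ denotes the $j$-th component of $\boldsymbol\zeta_{\mathbf t}$.
   Context: For $\mathbf t\in[0,1)^p$, $T_{\mathbf t}=\mathrm{Diag}(t_1,\dots,t_p)$, $X_{\mathbf t}=XT_{\mathbf t}$, $L_{\mathbf t}=\frac1n[X_{\mathbf t}^\top X_{\mathbf t}+\delta(I-T_{\mathbf t}^2)]$ (invertible for such $\mathbf t$) with $I$ the $p\times p$ identity, $\widetilde{\boldsymbol\beta}_{\mathbf t}=L_{\mathbf t}^{-1}(X_{\mathbf t}^\top\mathbf y/n)$, and $\odot$ denotes the element-wise product. Define $\mathbf a_{\mathbf t}=\frac{X^\top X}{n}(\mathbf t\odot\widetilde{\boldsymbol\beta}_{\mathbf t})-\frac{X^\top\mathbf y}{n}$, $\mathbf b_{\mathbf t}=\mathbf a_{\mathbf t}-\frac{\delta}{n}(\mathbf t\odot\widetilde{\boldsymbol\beta}_{\mathbf t})$, $\mathbf c_{\mathbf t}=L_{\mathbf t}^{-1}(\mathbf t\odot\mathbf a_{\mathbf t})$, $\mathbf d_{\mathbf t}=\left(\frac{X^\top X}{n}-\frac{\delta}{n}I\right)(\mathbf t\odot\mathbf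 c_{\mathbf t})$, and $\boldsymbol\zeta_{\mathbf t}=2(\widetilde{\boldsymbol\beta}_{\mathbf t}\odot(\mathbf a_{\mathbf t}-\mathbf d_{\mathbf t}))-2(\mathbf b_{\mathbf t}\odot\mathbf c_{\mathbf t})$. *)

(* Defs.v *)
From HB Require Import structures.
From mathcomp Require Import all_boot all_order all_algebra.
From mathcomp Require Import all_classical all_reals all_analysis.
Set Implicit Arguments. Unset Strict Implicit. Unset Printing Implicit Defensive.
Import Order.TTheory GRing.Theory Num.Theory.
Local Open Scope ring_scope.

Section Defs.
Variables (R : realType) (n p : nat).
Variables (X : 'M[R]_(n, p)) (y : 'cV[R]_n) (delta : R).

Definition hadamard (u v : 'cV[R]_p) : 'cV[R]_p := \col_i (u i 0 * v i 0).

Definition Tmat (t : 'cV[R]_p) : 'M[R]_p := diag_mx t^T.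
Definition Xt (t : 'cV[R]_p) : 'M[R]_(n, p) := X *m Tmat t.
Definition Lt (t : 'cV[R]_p) : 'M[R]_p :=
  n%:R^-1 *: ((Xt t)^T *m Xt t + delta *: (1%:M - Tmat t *m Tmat t)).
Definition betat (t : 'cV[R]_p) : 'cV[R]_p :=
  invmx (Lt t) *m (n%:R^-1 *: ((Xt t)^T *m y)).
Definition at_ (t : 'cV[R]_p) : 'cV[R]_p :=
  n%:R^-1 *: (X^T *m X) *m hadamard t (betat t) - n%:R^-1 *: (X^T *m y).
Definition bt (t : 'cV[R]_p) : 'cV[R]_p :=
  at_ t - (delta / n%:R) *: hadamard t (betat t).
Definition ct (t : 'cV[R]_p) : 'cV[R]_p := invmx (Lt t) *m hadamard t (at_ t).
Definition dt (t : 'cV[R]_p) : 'cV[R]_p :=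
  (n%:R^-1 *: (X^T *m X) - (delta / n%:R) *: 1%:M) *m hadamard t (ct t).
Definition zetat (t : 'cV[R]_p) : 'cV[R]_p :=
  2%:R *: hadamard (betat t) (at_ t - dt t) - 2%:R *: hadamard (bt t) (ct t).
End Defs.

Definition set_coord (R : realType) (p : nat) (t : 'cV[R]_p) (j : 'I_p) (s : R)
  : 'cV[R]_p := \col_i (if i == j then s else t i 0).

(* Main.v *)
Require Import Defs.
From HB Require Import structures.
From mathcomp Require Import all_boot all_order all_algebra.
From mathcomp Require Import all_classical all_reals all_analysis.
Import Order.TTheory GRing.Theory Num.Theory.
Import numFieldNormedType.Exports.
Local Open Scope classical_set_scope.
Local Open Scope ring_scope.
From mathcomp Require Import ring lra.

Section Cont.
Variable R : realType.

Definition CT (f : R -> R) := f x @[x --> (0:R)] --> f 0.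

Lemma CT_cst c : CT (fun _ => c).
Proof. exact: cvg_cst. Qed.

Lemma CT_id : CT id.
Proof. exact: cvg_id. Qed.

Lemma CT_add f g : CT f -> CT g -> CT (fun x => f x + g x).
Proof. move=> hf hg; exact: cvgD. Qed.

Lemma CT_opp f : CT f -> CT (fun x => - f x).
Proof. move=> hf; exact: cvgN. Qed.

Lemma CT_mul f g : CT f -> CT g -> CT (fun x => f x * g x).
Proof. move=> hf hg; exact: cvgM. Qed.

Lemma CT_inv f : f 0 != 0 -> CT f -> CT (fun x => (f x)^-1).
Proof. move=> h0 hf; exact: cvgV. Qed.

Lemma CT_sum (I : Type) (r : seq I) (P : pred I) (f : I -> R -> R) :
  (forall i, CT (f i)) -> CT (fun x => \sum_(i <- r | P i) f i x).
Proof.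
move=> h; elim: r => [|a r IH].
  have -> : (fun x => \sum_(i <- [::] | P i) f i x) = fun _ => 0.
    by apply: funext => x; rewrite big_nil.
  exact: CT_cst.
have -> : (fun x => \sum_(i <- a :: r | P i) f i x) =
   fun x => (if P a then f a x else 0) + \sum_(i <- r | P i) f i x.
  by apply: funext => x; rewrite big_cons; case: (P a); rewrite ?add0r.
apply: CT_add => //; case: (P a) => //; exact: CT_cst.
Qed.

Lemma CT_prod (I : Type) (r : seq I) (P : pred I) (f : I -> R -> R) :
  (forall i, CT (f i)) -> CT (fun x => \prod_(i <- r | P i) f i x).
Proof.
move=> h; elim: r => [|a r IH].
  have -> : (fun x => \prod_(i <- [::] | P i) f i x) = fun _ => 1.
    by apply: funext => x; rewrite big_nil.
  exact: CT_cst.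
have -> : (fun x => \prod_(i <- a :: r | P i) f i x) =
   fun x => (if P a then f a x else 1) * \prod_(i <- r | P i) f i x.
  by apply: funext => x; rewrite big_cons; case: (P a); rewrite ?mul1r.
apply: CT_mul => //; case: (P a) => //; exact: CT_cst.
Qed.

Definition MC (m k : nat) (F : R -> 'M[R]_(m, k)) := forall i l, CT (fun s => F s i l).
Arguments MC {m k}.

Lemma MC_cst (m k : nat) (A : 'M[R]_(m, k)) : MC (fun _ => A).
Proof. move=> i l; exact: CT_cst. Qed.

Lemma MC_add (m k : nat) (F G : R -> 'M[R]_(m, k)) : MC F -> MC G -> MC (fun s => F s + G s).
Proof.
move=> hF hG i l.
have -> : (fun s => (F s + G s) i l) = fun s => F s i l + G s i l.
  by apply: funext => s; rewrite mxE.
exact: CT_add.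
Qed.

Lemma MC_opp (m k : nat) (F : R -> 'M[R]_(m, k)) : MC F -> MC (fun s => - F s).
Proof.
move=> hF i l.
have -> : (fun s => (- F s) i l) = fun s => - F s i l.
  by apply: funext => s; rewrite mxE.
exact: CT_opp.
Qed.

Lemma MC_sub (m k : nat) (F G : R -> 'M[R]_(m, k)) : MC F -> MC G -> MC (fun s => F s - G s).
Proof. move=> hF hG; apply: MC_add => //; exact: MC_opp. Qed.

Lemma MC_scale (m k : nat) c (F : R -> 'M[R]_(m, k)) : MC F -> MC (fun s => c *: F s).
Proof.
move=> hF i l.
have -> : (fun s => (c *: F s) i l) = fun s => c * F s i l.
  by apply: funext => s; rewrite mxE.
apply: CT_mul => //; exact: CT_cst.
Qed.

Lemma MC_mul (a b c : nat) (F : R -> 'M[R]_(a, b)) (G : R -> 'M[R]_(b, c)) :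
  MC F -> MC G -> MC (fun s => F s *m G s).
Proof.
move=> hF hG i l.
have -> : (fun s => (F s *m G s) i l) = fun s => \sum_k F s i k * G s k l.
  by apply: funext => s; rewrite mxE.
apply: CT_sum => k; exact: CT_mul.
Qed.

Lemma MC_tr (m k : nat) (F : R -> 'M[R]_(m, k)) : MC F -> MC (fun s => (F s)^T).
Proof.
move=> hF i l.
have -> : (fun s => ((F s)^T) i l) = fun s => F s l i.
  by apply: funext => s; rewrite mxE.
exact: hF.
Qed.

Lemma MC_diag (m : nat) (F : R -> 'cV[R]_m) : MC F -> MC (fun s => diag_mx (F s)^T).
Proof.
move=> hF i l.
have -> : (fun s => (diag_mx (F s)^T) i l) = fun s => F s i 0 *+ (i == l).
  by apply: funext => s; rewrite !mxE.
case: (i == l); last exact: CT_cst.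
exact: hF.
Qed.

Lemma MC_had (m : nat) (F G : R -> 'cV[R]_m) : MC F -> MC G -> MC (fun s => hadamard (F s) (G s)).
Proof.
move=> hF hG i l.
have -> : (fun s => (hadamard (F s) (G s)) i l) = fun s => F s i 0 * G s i 0.
  by apply: funext => s; rewrite !mxE.
exact: CT_mul.
Qed.

Lemma CT_det (m : nat) (F : R -> 'M[R]_m) : MC F -> CT (fun s => \det (F s)).
Proof.
move=> hF; rewrite /determinant.
apply: CT_sum => sg; apply: CT_mul; first exact: CT_cst.
apply: CT_prod => i; exact: hF.
Qed.

Lemma MC_inv (m : nat) (F : R -> 'M[R]_m) : MC F -> F 0 \in unitmx -> MC (fun s => invmx (F s)).
Proof.
move=> hF hu.
have hd : CT (fun s => \det (F s)) by exact: CT_det.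
have hd0 : \det (F 0) != 0 by rewrite -unitfE -unitmxE.
have hnear : \forall s \near (0:R), \det (F s) != 0 := cvgr_neq0 _ hd hd0.
have hadj : MC (fun s => \adj (F s)).
  move=> i l.
  have -> : (fun s => (\adj (F s)) i l) =
     fun s => (-1) ^+ (l + i) * \det (row' l (col' i (F s))).
    by apply: funext => s; rewrite !mxE.
  apply: CT_mul; first exact: CT_cst.
  apply: CT_det => a b.
  have -> : (fun s => (row' l (col' i (F s))) a b) = fun s => F s (lift l a) (lift i b).
    by apply: funext => s; rewrite !mxE.
  exact: hF.
move=> i l.
have hform : CT (fun s => ((\det (F s))^-1 *: \adj (F s)) i l).
  have := MC_scale.
  have -> : (fun s => ((\det (F s))^-1 *: \adj (F s)) i l) =
       fun s => (\det (F s))^-1 * \adj (F s) i l.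
    by apply: funext => s; rewrite !mxE.
  by move=> _; apply: CT_mul => //; exact: CT_inv.
have heq : {near (0:R), (fun s => ((\det (F s))^-1 *: \adj (F s)) i l) =1
                         (fun s => invmx (F s) i l)}.
  near=> s.
  have : \det (F s) != 0 by near: s; exact: hnear.
  by rewrite /invmx unitmxE unitfE => ->.
rewrite /CT; apply: cvg_trans (near_eq_cvg heq) _.
by rewrite /invmx hu; exact: hform.
Unshelve. all: by end_near.
Qed.

End Cont.
Arguments MC {R m k}.
Arguments CT {R}.

Section Aux.
Local Set Implicit Arguments. Local Unset Strict Implicit.
Lemma Xt_j0 (R : realType) (n p : nat) (X : 'M[R]_(n, p)) (t : 'cV[R]_p) (j : 'I_p)
  (h : t j 0 = 0) i : Xt X t i j = 0.
Proof. by rewrite /Xt /Tmat mul_mx_diag !mxE h mulr0. Qed.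

Lemma Lrow (R : realType) (n p : nat) (X : 'M[R]_(n, p)) (delta : R) (t : 'cV[R]_p)
  (j : 'I_p) (h : t j 0 = 0) :
  row j (Lt X delta t) = (n%:R^-1 * delta) *: row j 1%:M.
Proof.
apply/rowP => k; rewrite /Lt /Xt /Tmat mul_mx_diag !mxE.
rewrite big1; last by move=> i _; rewrite !mxE h mulr0 mul0r.
rewrite big1; last by move=> i _; rewrite !mxE h mul0rn mul0r.
by rewrite add0r subr0 mulrA.
Qed.

Lemma inv_row0 (R : realType) (p : nat) (L : 'M[R]_p) (c : R) (j : 'I_p)
  (hu : L \in unitmx) (hc : c != 0) (hr : row j L = c *: row j 1%:M)
  (w : 'cV[R]_p) (hw : w j 0 = 0) : (invmx L *m w) j 0 = 0.
Proof.
have hM : row j (invmx L) = c^-1 *: row j 1%:M.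
  have := congr1 (row j) (mulmxV hu).
  rewrite row_mul hr -scalemxAl -row_mul mul1mx => <-.
  by rewrite scalerA mulVf // scale1r.
have -> : (invmx L *m w) j 0 = row j (invmx L *m w) 0 0 by rewrite [RHS]mxE.
by rewrite row_mul hM -scalemxAl -row_mul mul1mx !mxE hw mulr0.
Qed.

Lemma Z0_lemma (R : realType) (n p : nat) (hn : (0 < n)%N)
  (X : 'M[R]_(n, p)) (y : 'cV[R]_n) (delta : R) (hdelta : 0 < delta)
  (t : 'cV[R]_p) (j : 'I_p) (h : t j 0 = 0) (hu : Lt X delta t \in unitmx) :
  zetat X y delta t j 0 = 0.
Proof.
have hc : n%:R^-1 * delta != 0.
  by rewrite mulf_neq0 ?invr_eq0 ?pnatr_eq0 -?lt0n ?gt_eqF.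
have hb : betat X y delta t j 0 = 0.
  rewrite /betat; apply: (inv_row0 hu hc (Lrow X delta h)).
  rewrite /Xt /Tmat mul_mx_diag !mxE big1 ?mulr0 // => i _.
  by rewrite !mxE h mulr0 mul0r.
have hct : ct X y delta t j 0 = 0.
  rewrite /ct; apply: (inv_row0 hu hc (Lrow X delta h)).
  by rewrite !mxE h mul0r.
have E : forall (u v u' v' : 'cV[R]_p),
    (2%:R *: hadamard u v - 2%:R *: hadamard u' v') j 0 =
    2%:R * (u j 0 * v j 0) - 2%:R * (u' j 0 * v' j 0).
  by move=> u v u' v'; rewrite !mxE.
by rewrite /zetat E hb hct !mul0r !mulr0 subr0.
Qed.

Lemma Lunit (R : realType) (n p : nat) (hn : (0 < n)%N)
  (X : 'M[R]_(n, p)) (delta : R) (hdelta : 0 < delta) (t : 'cV[R]_p)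
  (ht : forall i : 'I_p, 0 <= t i 0 < 1) : Lt X delta t \in unitmx.
Proof.
rewrite unitmxE unitfE; apply/negP => /det0P [v vn0 hv].
set A := Xt X t; set T := Tmat t.
have E : v *m Lt X delta t *m v^T = n%:R^-1 *: ((v *m A^T) *m (v *m A^T)^T
     + delta *: (v *m v^T - (v *m T) *m (v *m T)^T)).
  rewrite /Lt -/A -/T -scalemxAr -scalemxAl; congr (_ *: _).
  rewrite mulmxDr mulmxDl -scalemxAr -scalemxAl mulmxBr mulmxBl mulmx1 !mulmxA.
  rewrite !trmx_mul trmxK /T tr_diag_mx !mulmxA.
  by rewrite /Tmat !tr_diag_mx.
have := congr1 (fun M : 'M[R]_1 => M 0 0) E.
rewrite hv mul0mx /T /Tmat mul_mx_diag; set a := v *m A^T.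
rewrite !mxE -sumrB => h0'.
have h0 : 0 = n%:R^-1 * (\sum_j a 0 j * a 0 j + delta *
    \sum_i (v 0 i * v 0 i - v 0 i * t i 0 * (v 0 i * t i 0))).
  by rewrite [LHS]h0'; congr (_ * (_ + _ * _)); apply: eq_bigr => i _; rewrite !mxE.
clear h0'.
have hn' : n%:R^-1 != 0 :> R by rewrite invr_eq0 pnatr_eq0 -lt0n.
move/esym/eqP: h0; rewrite mulf_eq0 (negbTE hn') /= => /eqP hZ.
set S1 := \sum_j _ in hZ.
set S2 := \sum_j _ in hZ.
have hS1 : 0 <= S1 by apply: sumr_ge0 => i _; rewrite -expr2 sqr_ge0.
have hterm : forall k : 'I_p, 0 <= v 0 k * v 0 k - v 0 k * t k 0 * (v 0 k * t k 0).
  move=> k; have /andP [h1 h2] := ht k.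
  have -> : v 0 k * v 0 k - v 0 k * t k 0 * (v 0 k * t k 0) =
            (v 0 k * v 0 k) * (1 - t k 0 * t k 0) by ring.
  apply: mulr_ge0; first by rewrite -expr2 sqr_ge0.
  nra.
have hS2 : 0 <= S2 by apply: sumr_ge0 => i _; exact: hterm.
have hdS : 0 <= delta * S2 by apply: mulr_ge0 => //; exact: ltW.
have hdS0 : delta * S2 = 0 by lra.
move/eqP: hdS0; rewrite mulf_eq0 (gt_eqF hdelta) /= => /eqP hS20.
have hall := (psumr_eq0P (fun i _ => hterm i) hS20).
move/eqP: vn0; apply; apply/rowP => k; rewrite mxE.
have hk := hall k isT.
have /andP [h1 h2] := ht k.
have : v 0 k * v 0 k * (1 - t k 0 * t k 0) = 0 by rewrite -hk; ring.
move/eqP; rewrite mulf_eq0 => /orP [|]; first by rewrite mulf_eq0 orbb => /eqP.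
move/eqP => h3; exfalso; nra.
Qed.

End Aux.

Theorem proposition1 (R : realType) (n p : nat) (hn : (0 < n)%N) (hp : (0 < p)%N)
  (X : 'M[R]_(n, p)) (y : 'cV[R]_n) (delta : R) (hdelta : 0 < delta)
  (j : 'I_p) (t : 'cV[R]_p)
  (ht : forall i : 'I_p, i != j -> 0 <= t i 0 < 1) :
  (fun s : R => zetat X y delta (set_coord t j s) j 0) x @[x --> 0^'+] --> 0.
Proof.
set tt := set_coord t j.
have Htt : MC tt.
  move=> i l.
  have -> : (fun s => tt s i l) = fun s => if i == j then s else t i 0.
    by apply: funext => s; rewrite /tt /set_coord mxE.
  case: (i == j); [exact: CT_id | exact: CT_cst].
have HT : MC (fun s => Tmat (tt s)) by exact: MC_diag.
have HX : MC (fun s => Xt X (tt s)) by apply: MC_mul => //; exact: MC_cst.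
have HL : MC (fun s => Lt X delta (tt s)).
  rewrite /Lt; apply: MC_scale; apply: MC_add.
    by apply: MC_mul => //; exact: MC_tr.
  apply: MC_scale; apply: MC_sub; first exact: MC_cst.
  exact: MC_mul.
have ht0 : forall i : 'I_p, 0 <= tt 0 i 0 < 1.
  move=> i; rewrite /tt /set_coord mxE; case: eqP => [_|/eqP hi].
    by rewrite lexx ltr01.
  exact: ht.
have htj : tt 0 j 0 = 0 by rewrite /tt /set_coord mxE eqxx.
have Hunit : Lt X delta (tt 0) \in unitmx by exact: Lunit.
have HiL : MC (fun s => invmx (Lt X delta (tt s))) by exact: MC_inv.
have Hb : MC (fun s => betat X y delta (tt s)).
  rewrite /betat; apply: MC_mul => //; apply: MC_scale; apply: MC_mul; 
    [exact: MC_tr | exact: MC_cst].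
have Ha : MC (fun s => at_ X y delta (tt s)).
  rewrite /at_; apply: MC_sub; last exact: MC_cst.
  apply: MC_mul; first exact: MC_cst.
  exact: MC_had.
have Hbt : MC (fun s => bt X y delta (tt s)).
  rewrite /bt; apply: MC_sub => //; apply: MC_scale; exact: MC_had.
have Hc : MC (fun s => ct X y delta (tt s)).
  rewrite /ct; apply: MC_mul => //; exact: MC_had.
have Hd : MC (fun s => dt X y delta (tt s)).
  rewrite /dt; apply: MC_mul; first exact: MC_cst.
  exact: MC_had.
have Hz : MC (fun s => zetat X y delta (tt s)).
  rewrite /zetat; apply: MC_sub; apply: MC_scale; apply: MC_had => //.
  exact: MC_sub.
have Z0 : zetat X y delta (tt 0) j 0 = 0 by exact: Z0_lemma.
apply: cvg_at_right_filter.
have e : forall (f : R -> R) (a b : R), a = b ->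
    f x @[x --> (0:R)] --> a -> f x @[x --> (0:R)] --> b by move=> ? ? ? ->.
exact: (e _ _ _ Z0 (Hz j 0)).
Qed.
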